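(* Let $A=\{a_n\}_{n\in\mathbb Z}\subset\mathbb R$ be an almost periodic set (multiplicities counted). Then there is $k_2\in\mathbb N$ such that for every $h>0$ and all $x_1,x_2\in\mathbb R$, $$\big|\#(A\cap[x_1,x_1+h))-\#(A\cap[x_2,x_2+h))\big|\le k_2,$$ and for every $x\in\mathbb R$, $h>0$, $M\in\mathbb N$, $$\Big|\#(A\cap[x,x+h))-\tfrac1M\,\#(A\cap[x,x+Mh))\Big|\le k_2.$$
   Context: A discrete locally finite multiset $A=\{a_n\}_{n\in\mathbb Z}\subset\mathbb R$ (a point may occur several times in the sequence) is called almost periodic if for every $\varepsilon>0$ the set of $\varepsilon$-almost periods $$E_\varepsilon=\{\tau\in\mathbb R:\ \exists\text{ a bijection }\sigma:\mathbb Z\to\mathbb Z\text{ with }\sup_n|a_n+\tau-a_{\sigma(n)}|<\varepsilon\}$$ is relatively dense, i.e. there is $L_\varepsilon>0$ such that $E_\varepsilon\cap(x,x+L_\varepsilon)\neq\emptyset$ for every $x\in\mathbb R$. For a set $H\subset\mathbb R$, $\#(A\cap H)$ denotes the number of indices $n$ with $a_n\in H$ (points counted with multiplicity). *)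

(* Defs.v *)
From HB Require Import structures.
From mathcomp Require Import all_boot all_order all_algebra.
From mathcomp Require Import finmap.
From mathcomp Require Import all_classical all_reals.
Set Implicit Arguments. Unset Strict Implicit. Unset Printing Implicit Defensive.
Import Order.TTheory GRing.Theory Num.Theory.
Local Open Scope classical_set_scope.
Local Open Scope ring_scope.

(* A multiset A = {a_n}_{n in Z} is given by the sequence a : int -> R. *)

Definition locally_finite (R : realType) (a : int -> R) : Prop :=
  forall x y : R, finite_set [set n : int | x <= a n <= y].

Definition count_in (R : realType) (a : int -> R) (x h : R) : nat :=
  (#|` fset_set [set n : int | (x <= a n < x + h)%R] |)%fset.

Definition almost_period (R : realType) (a : int -> R) (eps tau : R) : Prop :=
  exists sigma : int -> int, bijective sigma /\
    exists2 d : R, d < eps & forall n : int, `|a n + tau - a (sigma n)| <= d.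

Definition almost_periodic (R : realType) (a : int -> R) : Prop :=
  locally_finite a /\
  forall eps : R, 0 < eps ->
    exists2 L : R, 0 < L &
      forall x : R, exists tau : R, x < tau < x + L /\ almost_period a eps tau.

(* Main.v *)
Require Import Defs.
From HB Require Import structures.
From mathcomp Require Import all_boot all_order all_algebra.
From mathcomp Require Import finmap.
From mathcomp Require Import all_classical all_reals.
From mathcomp Require Import ring lra.
Import Order.TTheory GRing.Theory Num.Theory.
Local Open Scope classical_set_scope.
Local Open Scope ring_scope.
Set Implicit Arguments. Unset Strict Implicit.

Definition cnt (P : set int) : nat := (#|` fset_set P|)%fset.

Lemma cnt_sub (P Q : set int) : finite_set Q -> P `<=` Q -> (cnt P <= cnt Q)%N.
Proof.
move=> fQ PQ; have fP := sub_finite_set PQ fQ.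
by apply: fsubset_leq_card; rewrite -fset_set_sub.
Qed.

Lemma cnt_inj (P Q : set int) (f : int -> int) : finite_set P -> finite_set Q ->
  injective f -> (forall n, P n -> Q (f n)) -> (cnt P <= cnt Q)%N.
Proof.
move=> fP fQ fi PQ.
have -> : cnt P = cnt (f @` P).
  by rewrite /cnt fset_set_image // card_imfset.
by apply: cnt_sub => // y [x Px <-]; apply: PQ.
Qed.

Lemma cnt_U (P Q : set int) : finite_set P -> finite_set Q ->
  (cnt (P `|` Q) <= cnt P + cnt Q)%N.
Proof. by move=> fP fQ; rewrite /cnt fset_setU //; apply: leq_card_fsetU. Qed.

Lemma cnt_Udisj (P Q : set int) : finite_set P -> finite_set Q ->
  P `&` Q = set0 -> cnt (P `|` Q) = (cnt P + cnt Q)%N.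
Proof.
move=> fP fQ PQ; rewrite /cnt fset_setU //.
have := cardfsUI (fset_set P) (fset_set Q).
by rewrite -fset_setI // PQ fset_set0 cardfs0 addn0.
Qed.

Lemma cnt_closed_fin (R : realType) (a : int -> R) (lf : locally_finite a) (u v : R) :
  finite_set [set n : int | u <= a n <= v].
Proof. exact: lf. Qed.

Lemma transfer (R : realType) (a : int -> R) (lf : locally_finite a) (tau : R)
  (ap : almost_period a 1 tau) (P : set int) (u v : R) : finite_set P ->
  (forall n, P n -> u <= a n + tau - 1 /\ a n + tau + 1 <= v) ->
  (cnt P <= cnt [set m | (u <= a m <= v)%R])%N.
Proof.
move=> fP H; case: ap => s [bs [d d1 Hd]].
apply: (@cnt_inj _ _ s) => //; first exact: bij_inj.
move=> n /H [h1 h2]; have := Hd n; rewrite ler_norml => /andP [e1 e2].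
apply/andP; split; lra.
Qed.

Lemma sub_closed (R : realType) (a : int -> R) (x h : R) :
  [set n | x <= a n < x + h] `<=` [set n | x <= a n <= x + h].
Proof. by move=> n /= /andP [-> /ltW ->]. Qed.

Lemma count_le (R : realType) (a : int -> R) (lf : locally_finite a) (L : R)
  (HL : forall x : R, exists tau : R, x < tau < x + L /\ almost_period a 1 tau)
  (h x1 x2 : R) :
  (count_in a x1 h <= count_in a x2 h +
     2 * cnt [set m | (-1 <= a m <= L + (L + 1) + 1)%R])%N.
Proof.
set N := cnt _.
have Nb : forall y : R, (cnt [set n | (y <= a n <= y + (L + 1))%R] <= N)%N.
  move=> y; have [tau [/andP [t1 t2] ap]] := HL (- y).
  rewrite /N; apply: (transfer lf ap) => // n /andP [h1 h2]; split; lra.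
have [tau [/andP [t1 t2] ap]] := HL (x2 - x1).
have step1 : (cnt [set n | (x1 <= a n < x1 + h)%R] <=
   cnt [set m | (x2 - 1 <= a m <= x2 + h + L + 1)%R])%N.
  apply: (transfer lf ap) => //.
    apply: (sub_finite_set _ (lf x1 (x1 + h))); exact: sub_closed.
  move=> n /andP [h1 h2]; split; lra.
apply: (leq_trans step1).
set I2 := [set n | (x2 <= a n < x2 + h)%R].
set B1 := [set n | (x2 - 1 <= a n <= x2 - 1 + (L + 1))%R].
set B2 := [set n | (x2 + h <= a n <= x2 + h + (L + 1))%R].
have fI2 : finite_set I2 by apply: (sub_finite_set _ (lf x2 (x2 + h))); exact: sub_closed.
have fB1 : finite_set B1 by exact: lf.
have fB2 : finite_set B2 by exact: lf.
apply: (leq_trans (n := cnt (I2 `|` B1 `|` B2))).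
  apply: cnt_sub; first by rewrite !finite_setU; split; [split|].
  move=> m /andP [h1 h2].
  case: (ltP (a m) x2) => c1.
    left; right; apply/andP; split; lra.
  case: (ltP (a m) (x2 + h)) => c2.
    by left; left; apply/andP; split.
  right; apply/andP; split; lra.
apply: (leq_trans (cnt_U _ _)); first by rewrite finite_setU; split.
  by [].
rewrite mul2n -addnn addnA leq_add //; last exact: Nb.
apply: (leq_trans (cnt_U _ _)) => //.
by rewrite leq_add //; apply: Nb.
Qed.

Lemma count_split (R : realType) (a : int -> R) (lf : locally_finite a) (x h1 h2 : R) :
  0 <= h1 -> 0 <= h2 ->
  count_in a x (h1 + h2) = (count_in a x h1 + count_in a (x + h1) h2)%N.
Proof.
move=> p1 p2.
have -> : count_in a x (h1 + h2) =
  cnt ([set n | (x <= a n < x + h1)%R] `|` [set n | (x + h1 <= a n < x + h1 + h2)%R]).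
  rewrite /count_in /cnt; congr (#|` fset_set _|)%fset.
  apply/seteqP; split => n /=.
    move=> /andP [c1 c2]; case: (ltP (a n) (x + h1)) => c3.
      by left; apply/andP.
    right; apply/andP; split => //; lra.
  case=> /andP [c1 c2]; apply/andP; split; lra.
apply: cnt_Udisj.
- apply: (sub_finite_set _ (lf x (x + h1))); exact: sub_closed.
- apply: (sub_finite_set _ (lf (x + h1) (x + h1 + h2))); exact: sub_closed.
- apply/seteqP; split => n //= [/andP [c1 c2] /andP [c3 c4]]; lra.
Qed.

Lemma abs_le_nat (R : realType) (p q k : nat) : (p <= q + k)%N -> (q <= p + k)%N ->
  `| p%:R - q%:R | <= k%:R :> R.
Proof.
move=> h1 h2; rewrite ler_norml; apply/andP; split.
  have : (q%:R <= p%:R + k%:R :> R) by rewrite -natrD ler_nat.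
  lra.
have : (p%:R <= q%:R + k%:R :> R) by rewrite -natrD ler_nat.
lra.
Qed.

Theorem proposition2 (R : realType) (a : int -> R) :
  almost_periodic a ->
  exists k2 : nat,
    (forall (h x1 x2 : R), 0 < h ->
       `| (count_in a x1 h)%:R - (count_in a x2 h)%:R | <= k2%:R :> R) /\
    (forall (x h : R) (M : nat), 0 < h -> (0 < M)%N ->
       `| (count_in a x h)%:R - (count_in a x (M%:R * h))%:R / M%:R | <= k2%:R :> R).
Proof.
move=> [lf Hap]; have [L L0 HL] := Hap 1 ltr01.
set k := (2 * cnt [set m | (-1 <= a m <= L + (L + 1) + 1)%R])%N.
have P1 : forall h x1 x2 : R,
    `| (count_in a x1 h)%:R - (count_in a x2 h)%:R | <= k%:R :> R.
  by move=> h x1 x2; apply: abs_le_nat; apply: count_le.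
exists k; split => [h x1 x2 _|x h M h0 M0]; first exact: P1.
have key : forall m : nat, `| m%:R * (count_in a x h)%:R - (count_in a x (m%:R * h))%:R |
    <= m%:R * k%:R :> R.
  elim=> [|m IH].
    rewrite !mul0r; have -> : count_in a x 0 = 0%N.
      rewrite /count_in.
      have -> : [set n | (x <= a n < x + 0)%R] = set0.
        by apply/seteqP; split => n //= /andP [c1 c2]; lra.
      by rewrite fset_set0.
    by rewrite subrr normr0.
  have -> : (m.+1%:R * h) = m%:R * h + h by rewrite -addn1 natrD mulrDl mul1r.
  rewrite count_split //; last exact: ltW.
    2: by apply: mulr_ge0 => //; exact: ltW.
  rewrite natrD -addn1 natrD !mulrDl !mul1r.
  have := P1 h x (x + m%:R * h).
  move: IH; set u := (count_in a x h)%:R; set v := (count_in a x (m%:R * h))%:R.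
  set w := (count_in a (x + m%:R * h) h)%:R => IH1 IH2.
  have -> : m%:R * u + u - (v + w) = (m%:R * u - v) + (u - w) by ring.
  apply: le_trans (ler_normD _ _) _.
  exact: lerD.
have Mp : 0 < M%:R :> R by rewrite ltr0n.
have := key M.
have -> : (count_in a x h)%:R - (count_in a x (M%:R * h))%:R / M%:R =
   (M%:R * (count_in a x h)%:R - (count_in a x (M%:R * h))%:R) / M%:R :> R.
  by field; rewrite gt_eqF.
rewrite normrM normfV (gtr0_norm Mp) => H.
by rewrite ler_pdivrMr // [_ * M%:R]mulrC.
Qed.
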